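(* Let $h:\mathbb{R}\to(0,\infty)$ be continuously differentiable and monotone, with $h(x)\to k_{-\infty}$ as $x\to-\infty$ and $h(x)\to k_{+\infty}$ as $x\to+\infty$. Then $$T\ \ge\ \mathrm{sech}^2\left\{\frac12\left|\ln\frac{k_{+\infty}}{k_{-\infty}}\right|+\frac12\int_{-\infty}^{\infty}\frac{|k^2-h^2|}{h}\,\mathrm{d}x\right\}.$$
   Context: Standing setup: $k^2:\mathbb{R}\to\mathbb{R}$ is a piecewise continuous function (it may be negative somewhere) with $k^2(x)\to k_{\pm\infty}^2$ as $x\to\pm\infty$, where $k_{\pm\infty}>0$ and $k^2-k_{\pm\infty}^2$ is integrable near $\pm\infty$. For the equation $u''+k^2(x)u=0$ there is a solution with $u(x)=e^{ik_{-\infty}x}+r\,e^{-ik_{-\infty}x}+o(1)$ as $x\to-\infty$ and $u(x)=\tau\,e^{ik_{+\infty}x}+o(1)$ as $x\to+\infty$; the transmission probability is $T=(k_{+\infty}/k_{-\infty})|\tau|^2$. Here $\mathrm{sech}=1/\cosh$, and if the integral equals $+\infty$ the bound is read as the trivial statement $T\ge 0$. *)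

(* Defs.v *)
From Stdlib Require Import Reals Lra List.
Open Scope R_scope.

Definition lim_pinf (f : R -> R) (l : R) : Prop :=
  forall eps, 0 < eps -> exists M, forall x, M <= x -> Rabs (f x - l) < eps.
Definition lim_minf (f : R -> R) (l : R) : Prop :=
  forall eps, 0 < eps -> exists M, forall x, x <= M -> Rabs (f x - l) < eps.

Definition left_lim (f : R -> R) (x l : R) : Prop :=
  forall eps, 0 < eps -> exists d, 0 < d /\
    forall y, x - d < y < x -> Rabs (f y - l) < eps.
Definition right_lim (f : R -> R) (x l : R) : Prop :=
  forall eps, 0 < eps -> exists d, 0 < d /\
    forall y, x < y < x + d -> Rabs (f y - l) < eps.

Definition piecewise_continuous (f : R -> R) : Prop :=
  (forall x, exists lL lR, left_lim f x lL /\ right_lim f x lR) /\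
  (forall a b, exists D : list R,
     forall x, a <= x <= b -> ~ In x D -> continuity_pt f x).

Definition has_integral (f : R -> R) (a b v : R) : Prop :=
  exists pr : Riemann_integrable f a b, RiemannInt pr = v.

Definition integrable_near_pinf (f : R -> R) : Prop :=
  exists a M, forall b, a <= b ->
    exists v, has_integral (fun x => Rabs (f x)) a b v /\ v <= M.
Definition integrable_near_minf (f : R -> R) : Prop :=
  exists b M, forall a, a <= b ->
    exists v, has_integral (fun x => Rabs (f x)) a b v /\ v <= M.

Definition improper_integral_R (f : R -> R) (I : R) : Prop :=
  (forall a b, a <= b -> exists v, has_integral f a b v) /\
  (forall eps, 0 < eps -> exists M, forall a b, a <= - M -> M <= b ->
     exists v, has_integral f a b v /\ Rabs (v - I) < eps).

Definition is_solution (k2 u : R -> R) : Prop :=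
  exists du : R -> R,
    (forall x, derivable_pt_lim u x (du x)) /\
    (forall x, continuity_pt du x) /\
    (forall x, continuity_pt k2 x -> derivable_pt_lim du x (- (k2 x * u x))).

Definition is_C1 (h : R -> R) : Prop :=
  exists dh : R -> R,
    (forall x, derivable_pt_lim h x (dh x)) /\ (forall x, continuity_pt dh x).

Definition monotone (h : R -> R) : Prop :=
  (forall x y, x <= y -> h x <= h y) \/ (forall x y, x <= y -> h y <= h x).

Definition sech (x : R) : R := 1 / cosh x.

Definition Cx := (R * R)%type.
Definition Cadd (z w : Cx) : Cx := (fst z + fst w, snd z + snd w).
Definition Cmul (z w : Cx) : Cx :=
  (fst z * fst w - snd z * snd w, fst z * snd w + snd z * fst w).
Definition Cexpi (t : R) : Cx := (cos t, sin t).
Definition Cnorm2 (z : Cx) : R := fst z ^ 2 + snd z ^ 2.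

Definition Clim0_pinf (f : R -> Cx) : Prop :=
  lim_pinf (fun x => fst (f x)) 0 /\ lim_pinf (fun x => snd (f x)) 0.
Definition Clim0_minf (f : R -> Cx) : Prop :=
  lim_minf (fun x => fst (f x)) 0 /\ lim_minf (fun x => snd (f x)) 0.

(* Main.v *)
Require Import Defs.
From Stdlib Require Import Reals Lra Lia List RList.
Open Scope R_scope.

Lemma abs_le_inv x y : Rabs x <= y -> - y <= x <= y.
Proof. unfold Rabs; destruct (Rcase_abs x); lra. Qed.
Lemma abs_lt_inv x y : Rabs x < y -> - y < x < y.
Proof. unfold Rabs; destruct (Rcase_abs x); lra. Qed.
Lemma abs_le_intro x y : - y <= x <= y -> Rabs x <= y.
Proof. unfold Rabs; destruct (Rcase_abs x); lra. Qed.
Lemma abs_lt_intro x y : - y < x < y -> Rabs x < y.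
Proof. unfold Rabs; destruct (Rcase_abs x); lra. Qed.

Lemma cmp0 (K dK : R -> R) (c x y : R) :
  x <= y -> (forall t, x <= t <= y -> continuity_pt K t) ->
  (forall t, x < t < y -> derivable_pt_lim K t (dK t) /\ dK t <= c) ->
  K y - K x <= c * (y - x).
Proof.
  intros Hxy Hc Hd.
  destruct (Req_dec x y) as [->|Hne]. { lra. }
  assert (Hlt : x < y) by lra.
  pose (pr1 := fun t (P : x < t < y) => exist (fun l => derivable_pt_abs K t l) (dK t) (proj1 (Hd t P))).
  pose (pr2 := fun t (P : x < t < y) => derivable_pt_id t).
  destruct (MVT K id x y pr1 pr2 Hlt Hc (fun t _ => derivable_continuous_pt _ _ (derivable_pt_id t)))
    as [t [P HP]].
  replace (derive_pt K t (pr1 t P)) with (dK t) in HP by reflexivity.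
  replace (derive_pt id t (pr2 t P)) with 1 in HP
    by (symmetry; apply derive_pt_eq_0; apply derivable_pt_lim_id).
  unfold id in HP.
  destruct (Hd t P) as [_ Hle].
  assert (K y - K x = dK t * (y - x)) by lra.
  rewrite H. apply Rmult_le_compat_r; lra.
Qed.

Lemma cmp (K dK : R -> R) (c : R) (D : list R) : forall x y,
  x <= y -> (forall t, x <= t <= y -> continuity_pt K t) ->
  (forall t, x < t < y -> ~ In t D -> derivable_pt_lim K t (dK t) /\ dK t <= c) ->
  K y - K x <= c * (y - x).
Proof.
  induction D as [|d D IH]; intros x y Hxy Hc Hd.
  - apply cmp0 with dK; auto.
  - destruct (Rlt_dec x d) as [H1|H1]; [destruct (Rlt_dec d y) as [H2|H2]|].
    + assert (A : K d - K x <= c * (d - x)).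
      { apply IH; [lra| intros; apply Hc; lra|].
        intros t Ht Hn; apply Hd; [lra|]. intros [E|E]; [lra|tauto]. }
      assert (B : K y - K d <= c * (y - d)).
      { apply IH; [lra| intros; apply Hc; lra|].
        intros t Ht Hn; apply Hd; [lra|]. intros [E|E]; [lra|tauto]. }
      lra.
    + apply IH; auto. intros t Ht Hn; apply Hd; auto. intros [E|E]; [lra|tauto].
    + apply IH; auto. intros t Ht Hn; apply Hd; auto. intros [E|E]; [lra|tauto].
Qed.

Lemma sf_bound (K dK f : R -> R) (D : list R) : forall l lf a b,
  adapted_couple f a b l lf -> a <= b ->
  (forall t, a <= t <= b -> continuity_pt K t) ->
  (forall t, a < t < b -> ~ In t D -> derivable_pt_lim K t (dK t) /\ dK t <= f t) ->
  K b - K a <= Int_SF lf l.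
Proof.
  induction l as [|x l IH]; intros lf a b Had Hab Hc Hd.
  - destruct Had as [_ [_ [_ [E _]]]]. simpl in E. discriminate.
  - destruct l as [|y l].
    + destruct Had as [_ [E1 [E2 _]]]. simpl in E1, E2.
      rewrite Rmin_left in E1 by lra. rewrite Rmax_right in E2 by lra.
      destruct lf; simpl; replace b with a by lra; lra.
    + destruct lf as [|v lf].
      { destruct Had as [_ [_ [_ [E _]]]]. simpl in E. discriminate. }
      assert (Had' := StepFun_P7 Hab Had).
      destruct Had as [Hord [E1 [E2 [E3 Hcst]]]].
      simpl in E1. rewrite Rmin_left in E1 by lra. subst x.
      assert (Hxy : a <= y) by (apply (Hord 0%nat); simpl; lia).
      assert (Hyb : y <= b).
      { assert (HH := RList_P7 _ y Hord (or_intror (or_introl eq_refl))).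
        rewrite E2 in HH. rewrite Rmax_right in HH; lra. }
      assert (A : K y - K a <= v * (y - a)).
      { apply (cmp K dK v D); auto.
        - intros; apply Hc; lra.
        - intros t Ht Hn. destruct (Hd t ltac:(lra) Hn) as [H1 H2]. split; auto.
          pose proof (Hcst 0%nat ltac:(simpl; lia) t Ht) as Hv. simpl in Hv.
          rewrite <- Hv. exact H2. }
      assert (B : K b - K y <= Int_SF lf (y :: l)).
      { apply IH; auto. intros; apply Hc; lra. intros; apply Hd; auto; lra. }
      simpl. simpl in B. lra.
Qed.

Lemma riemann_bound (K dK g : R -> R) (D : list R) (a b : R)
  (pr : Riemann_integrable g a b) :
  a <= b -> (forall t, a <= t <= b -> continuity_pt K t) ->
  (forall t, a < t < b -> ~ In t D -> derivable_pt_lim K t (dK t) /\ dK t <= g t) ->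
  K b - K a <= RiemannInt pr.
Proof.
  intros Hab Hc Hd.
  unfold RiemannInt. destruct (RiemannInt_exists pr RinvN RinvN_cv) as [l Hl].
  assert (Hn : forall n, K b - K a <=
     RiemannInt_SF (phi_sequence RinvN pr n) + RinvN n).
  { intro n. destruct (phi_sequence_prop RinvN pr n) as [psi [H1 H2]].
    set (phi := phi_sequence RinvN pr n) in *.
    set (s := mkStepFun (StepFun_P28 1 phi psi)).
    assert (Hs : RiemannInt_SF s = RiemannInt_SF phi + 1 * RiemannInt_SF psi)
      by apply StepFun_P30.
    assert (Hle : K b - K a <= RiemannInt_SF s).
    { unfold RiemannInt_SF. destruct (Rle_dec a b) as [_|Hn]; [|lra].
      apply (sf_bound K dK s D _ _ a b (StepFun_P1 s) Hab Hc).
      intros t Ht HnD. destruct (Hd t Ht HnD) as [A B]. split; auto.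
      simpl. assert (HH : Rmin a b <= t <= Rmax a b).
      { rewrite Rmin_left, Rmax_right; lra. }
      specialize (H1 t HH). apply abs_le_inv in H1. lra. }
    apply abs_lt_inv in H2. simpl in *. lra. }
  apply (@Rle_cv_lim (fun _ => K b - K a)
     (fun n => RiemannInt_SF (phi_sequence RinvN pr n) + RinvN n)).
  - exact Hn.
  - intros eps He. exists 0%nat. intros. unfold Rdist. rewrite Rminus_diag, Rabs_R0. auto.
  - replace l with (l + 0) by ring. apply CV_plus; auto. apply RinvN_cv.
Qed.

Definition evs (s : R) (P : R -> Prop) := exists M, forall x, M <= s * x -> P x.
Definition L0 (s : R) (f : R -> R) := forall eps, 0 < eps -> evs s (fun x => Rabs (f x) < eps).
Definition EB (s : R) (f : R -> R) := exists B, evs s (fun x => Rabs (f x) <= B).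

Lemma evs_and s P Q : evs s P -> evs s Q -> evs s (fun x => P x /\ Q x).
Proof.
  intros [M1 H1] [M2 H2]. exists (Rmax M1 M2). intros x Hx. split.
  apply H1. apply Rle_trans with (2 := Hx); apply Rmax_l.
  apply H2. apply Rle_trans with (2 := Hx); apply Rmax_r.
Qed.

Lemma evs_mono s (P Q : R -> Prop) : (forall x, P x -> Q x) -> evs s P -> evs s Q.
Proof. intros H [M HM]. exists M. auto. Qed.

Lemma L0_plus s f g : L0 s f -> L0 s g -> L0 s (fun x => f x + g x).
Proof.
  intros Hf Hg eps He. apply (evs_mono s (fun x => Rabs (f x) < eps/2 /\ Rabs (g x) < eps/2)).
  - intros x [A B]. apply Rle_lt_trans with (1 := Rabs_triang _ _). lra.
  - apply evs_and; [apply Hf|apply Hg]; lra.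
Qed.

Lemma L0_opp s f : L0 s f -> L0 s (fun x => - f x).
Proof. intros Hf eps He. apply (evs_mono s (fun x => Rabs (f x) < eps)); auto.
  intros x; rewrite Rabs_Ropp; auto. Qed.

Lemma L0_minus s f g : L0 s f -> L0 s g -> L0 s (fun x => f x - g x).
Proof. intros; apply L0_plus; auto; apply L0_opp; auto. Qed.

Lemma L0_ext s f g : (forall x, f x = g x) -> L0 s f -> L0 s g.
Proof. intros E Hf eps He. apply (evs_mono s (fun x => Rabs (f x) < eps)); auto.
  intros x; rewrite E; auto. Qed.

Lemma L0_ev_ext s f g : evs s (fun x => f x = g x) -> L0 s f -> L0 s g.
Proof. intros E Hf eps He. apply (evs_mono s (fun x => f x = g x /\ Rabs (f x) < eps)).
  intros x [A B]; rewrite <- A; auto. apply evs_and; auto. Qed.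

Lemma L0_EB s f : L0 s f -> EB s f.
Proof. intros Hf. exists 1. apply (evs_mono s (fun x => Rabs (f x) < 1)); [intros; lra|].
  apply Hf; lra. Qed.

Lemma EB_const s c : EB s (fun _ => c).
Proof. exists (Rabs c). exists 0. intros; lra. Qed.

Lemma EB_plus s f g : EB s f -> EB s g -> EB s (fun x => f x + g x).
Proof.
  intros [B1 H1] [B2 H2]. exists (B1 + B2).
  apply (evs_mono s (fun x => Rabs (f x) <= B1 /\ Rabs (g x) <= B2)).
  - intros x [A B]. apply Rle_trans with (1 := Rabs_triang _ _). lra.
  - apply evs_and; auto.
Qed.

Lemma EB_mult s f g : EB s f -> EB s g -> EB s (fun x => f x * g x).
Proof.
  intros [B1 H1] [B2 H2]. exists (B1 * B2).
  apply (evs_mono s (fun x => Rabs (f x) <= B1 /\ Rabs (g x) <= B2)).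
  - intros x [A B]. rewrite Rabs_mult. apply Rmult_le_compat; auto; apply Rabs_pos.
  - apply evs_and; auto.
Qed.

Lemma EB_ext s f g : (forall x, f x = g x) -> EB s f -> EB s g.
Proof. intros E [B H]. exists B. apply (evs_mono s (fun x => Rabs (f x) <= B)); auto.
  intros x; rewrite E; auto. Qed.

Lemma L0_mult s f g : L0 s f -> EB s g -> L0 s (fun x => f x * g x).
Proof.
  intros Hf [B HB] eps He.
  set (B' := Rabs B + 1).
  assert (HB' : 0 < B') by (unfold B'; pose proof (Rabs_pos B); lra).
  apply (evs_mono s (fun x => Rabs (f x) < eps / B' /\ Rabs (g x) <= B)).
  - intros x [A C]. rewrite Rabs_mult.
    assert (Rabs (g x) <= B') by (unfold B'; pose proof (RRle_abs B); lra).
    apply Rle_lt_trans with (Rabs (f x) * B').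
    + apply Rmult_le_compat_l; auto; apply Rabs_pos.
    + apply Rlt_le_trans with (eps / B' * B').
      * apply Rmult_lt_compat_r; auto.
      * right; field; lra.
  - apply evs_and; auto. apply Hf. apply Rdiv_lt_0_compat; auto.
Qed.

Lemma L0_mult_l s f g : EB s g -> L0 s f -> L0 s (fun x => g x * f x).
Proof. intros; apply L0_ext with (fun x => f x * g x). intros; ring. apply L0_mult; auto. Qed.

Lemma L0_const0 s : L0 s (fun _ => 0).
Proof. intros eps He. exists 0. intros; rewrite Rabs_R0; auto. Qed.

Lemma lim_pinf_L0 f l : lim_pinf f l -> L0 1 (fun x => f x - l).
Proof. intros H eps He. destruct (H eps He) as [M HM]. exists M. intros x Hx.
  apply HM. lra. Qed.

Lemma lim_minf_L0 f l : lim_minf f l -> L0 (-1) (fun x => f x - l).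
Proof. intros H eps He. destruct (H eps He) as [M HM]. exists (- M). intros x Hx.
  apply HM. lra. Qed.

Lemma L0_pos_inv s f l : 0 < l -> L0 s (fun x => f x - l) ->
  evs s (fun x => l / 2 < f x) /\ EB s (fun x => / f x).
Proof.
  intros Hl Hf.
  assert (Hev : evs s (fun x => l / 2 < f x)).
  { apply (evs_mono s (fun x => Rabs (f x - l) < l / 2)).
    intros x Hx. apply abs_lt_inv in Hx. lra. apply Hf; lra. }
  split; auto. exists (2 / l). apply (evs_mono s (fun x => l / 2 < f x)); auto.
  intros x Hx. rewrite Rabs_inv. rewrite Rabs_pos_eq by lra.
  replace (2 / l) with (/ (l / 2)) by (field; lra).
  apply Rinv_le_contravar; lra.
Qed.

Lemma dquad (f df : R -> R) a c x0 t :
  derivable_pt_lim f t (df t) ->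
  derivable_pt_lim (fun u => f u - a * u + c * (u - x0) ^ 2) t
     (df t - a + c * (2 * (t - x0))).
Proof.
  intros Hf.
  apply derivable_pt_lim_plus.
  - apply derivable_pt_lim_minus; auto.
    replace a with (a * 1) at 2 by ring.
    apply derivable_pt_lim_scal. apply derivable_pt_lim_id.
  - apply derivable_pt_lim_scal.
    replace (2 * (t - x0)) with (INR 2 * (t - x0) ^ Nat.pred 2 * 1) by (simpl; ring).
    apply (derivable_pt_lim_comp (fun u => u - x0) (fun u => u ^ 2)).
    + replace 1 with (1 - 0) by ring. apply derivable_pt_lim_minus.
      apply derivable_pt_lim_id. apply derivable_pt_lim_const.
    + apply derivable_pt_lim_pow.
Qed.

Lemma cont_of_deriv (f df : R -> R) :
  (forall x, derivable_pt_lim f x (df x)) -> forall x, continuity_pt f x.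
Proof.
  intros H x. apply derivable_continuous_pt. exists (df x). apply H.
Qed.

Lemma taylorL (f df ddf : R -> R) (D : list R) x y B :
  x <= y ->
  (forall t, derivable_pt_lim f t (df t)) ->
  (forall t, continuity_pt df t) ->
  (forall t, x <= t <= y -> ~ In t D -> derivable_pt_lim df t (ddf t)) ->
  (forall t, x <= t <= y -> Rabs (ddf t) <= B) ->
  Rabs (f y - f x - df x * (y - x)) <= B * (y - x) ^ 2 / 2.
Proof.
  intros Hxy Hf Hdfc Hdd HB.
  assert (Hd1 : forall t, x <= t <= y -> Rabs (df t - df x) <= B * (t - x)).
  { intros t Ht. apply abs_le_intro. split.
    - assert (H := cmp (fun u => - df u) (fun u => - ddf u) B D x t ltac:(lra)).
      assert (H' : - df t - - df x <= B * (t - x)).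
      { apply H. intros; apply continuity_pt_opp; auto.
        intros u Hu Hn. split. apply derivable_pt_lim_opp. apply Hdd; auto; lra.
        pose proof (HB u ltac:(lra)) as Hb. apply abs_le_inv in Hb; lra. }
      lra.
    - apply (cmp df ddf B D x t ltac:(lra)). intros; auto.
      intros u Hu Hn. split. apply Hdd; auto; lra.
      pose proof (HB u ltac:(lra)) as Hb. apply abs_le_inv in Hb; lra. }
  apply abs_le_intro. split.
  - assert (H := cmp0 (fun u => - f u - (- df x) * u + (- (B / 2)) * (u - x) ^ 2)
       (fun t => - df t - - df x + - (B / 2) * (2 * (t - x))) 0 x y Hxy).
    assert (H' : forall t, x <= t <= y -> continuity_pt
       (fun u => - f u - (- df x) * u + (- (B / 2)) * (u - x) ^ 2) t).
    { intros t _. apply derivable_continuous_pt.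
      exists (- df t - - df x + - (B / 2) * (2 * (t - x))).
      apply (dquad (fun u => - f u) (fun u => - df u)). apply derivable_pt_lim_opp; auto. }
    specialize (H H').
    assert (H'' : 0 * (y - x) >= (- f y - - df x * y + - (B / 2) * (y - x) ^ 2) -
              (- f x - - df x * x + - (B / 2) * (x - x) ^ 2)).
    { apply Rle_ge, H. intros t Ht. split.
      apply (dquad (fun u => - f u) (fun u => - df u)). apply derivable_pt_lim_opp; auto.
      pose proof (Hd1 t ltac:(lra)) as Hb. apply abs_le_inv in Hb. lra. }
    lra.
  - assert (H := cmp0 (fun u => f u - (df x) * u + (- (B / 2)) * (u - x) ^ 2)
       (fun t => df t - df x + - (B / 2) * (2 * (t - x))) 0 x y Hxy).
    assert (H' : forall t, x <= t <= y -> continuity_pt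
       (fun u => f u - (df x) * u + (- (B / 2)) * (u - x) ^ 2) t).
    { intros t _. apply derivable_continuous_pt.
      exists (df t - df x + - (B / 2) * (2 * (t - x))).
      apply dquad; auto. }
    specialize (H H').
    assert (H'' : 0 * (y - x) >= (f y - df x * y + - (B / 2) * (y - x) ^ 2) -
              (f x - df x * x + - (B / 2) * (x - x) ^ 2)).
    { apply Rle_ge, H. intros t Ht. split.
      apply dquad; auto.
      pose proof (Hd1 t ltac:(lra)) as Hb. apply abs_le_inv in Hb. lra. }
    lra.
Qed.

Lemma taylorR (f df ddf : R -> R) (D : list R) x y B :
  x <= y ->
  (forall t, derivable_pt_lim f t (df t)) ->
  (forall t, continuity_pt df t) ->
  (forall t, x <= t <= y -> ~ In t D -> derivable_pt_lim df t (ddf t)) ->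
  (forall t, x <= t <= y -> Rabs (ddf t) <= B) ->
  Rabs (f x - f y - df y * (x - y)) <= B * (y - x) ^ 2 / 2.
Proof.
  intros Hxy Hf Hdfc Hdd HB.
  assert (Hd1 : forall t, x <= t <= y -> Rabs (df t - df y) <= B * (y - t)).
  { intros t Ht. apply abs_le_intro. split.
    - assert (H : df y - df t <= B * (y - t)).
      { apply (cmp df ddf B D t y ltac:(lra)). intros; auto.
        intros u Hu Hn. split. apply Hdd; auto; lra.
        pose proof (HB u ltac:(lra)) as Hb. apply abs_le_inv in Hb; lra. }
      lra.
    - assert (H := cmp (fun u => - df u) (fun u => - ddf u) B D t y ltac:(lra)).
      assert (H' : - df y - - df t <= B * (y - t)).
      { apply H. intros; apply continuity_pt_opp; auto.
        intros u Hu Hn. split. apply derivable_pt_lim_opp. apply Hdd; auto; lra.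
        pose proof (HB u ltac:(lra)) as Hb. apply abs_le_inv in Hb; lra. }
      lra. }
  apply abs_le_intro. split.
  - assert (H := cmp0 (fun u => f u - (df y) * u + (B / 2) * (u - y) ^ 2)
       (fun t => df t - df y + (B / 2) * (2 * (t - y))) 0 x y Hxy).
    assert (H' : forall t, x <= t <= y -> continuity_pt
       (fun u => f u - (df y) * u + (B / 2) * (u - y) ^ 2) t).
    { intros t _. apply derivable_continuous_pt.
      exists (df t - df y + (B / 2) * (2 * (t - y))).
      apply dquad; auto. }
    specialize (H H').
    assert (H'' : 0 * (y - x) >= (f y - df y * y + (B / 2) * (y - y) ^ 2) -
              (f x - df y * x + (B / 2) * (x - y) ^ 2)).
    { apply Rle_ge, H. intros t Ht. split.
      apply dquad; auto.
      pose proof (Hd1 t ltac:(lra)) as Hb. apply abs_le_inv in Hb. lra. }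
    replace ((x - y) ^ 2) with ((y - x) ^ 2) in H'' by ring. lra.
  - assert (H := cmp0 (fun u => - f u - (- df y) * u + (B / 2) * (u - y) ^ 2)
       (fun t => - df t - - df y + (B / 2) * (2 * (t - y))) 0 x y Hxy).
    assert (H' : forall t, x <= t <= y -> continuity_pt
       (fun u => - f u - (- df y) * u + (B / 2) * (u - y) ^ 2) t).
    { intros t _. apply derivable_continuous_pt.
      exists (- df t - - df y + (B / 2) * (2 * (t - y))).
      apply (dquad (fun u => - f u) (fun u => - df u)). apply derivable_pt_lim_opp; auto. }
    specialize (H H').
    assert (H'' : 0 * (y - x) >= (- f y - - df y * y + (B / 2) * (y - y) ^ 2) -
              (- f x - - df y * x + (B / 2) * (x - y) ^ 2)).
    { apply Rle_ge, H. intros t Ht. split.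
      apply (dquad (fun u => - f u) (fun u => - df u)). apply derivable_pt_lim_opp; auto.
      pose proof (Hd1 t ltac:(lra)) as Hb. apply abs_le_inv in Hb. lra. }
    replace ((x - y) ^ 2) with ((y - x) ^ 2) in H'' by ring. lra.
Qed.

Lemma landau s (f df ddf : R -> R) :
  s = 1 \/ s = -1 ->
  (forall t, derivable_pt_lim f t (df t)) ->
  (forall t, continuity_pt df t) ->
  (forall a b, exists D : list R, forall t, a <= t <= b -> ~ In t D ->
      derivable_pt_lim df t (ddf t)) ->
  L0 s f -> L0 s ddf -> L0 s df.
Proof.
  intros Hs Hf Hdfc Hpw Hf0 Hdd0 eps He.
  destruct (Hf0 (eps / 4) ltac:(lra)) as [M1 H1].
  destruct (Hdd0 (eps / 2) ltac:(lra)) as [M2 H2].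
  exists (Rmax M1 M2). intros x Hx.
  assert (HM1 := Rmax_l M1 M2). assert (HM2 := Rmax_r M1 M2).
  destruct Hs as [->| ->].
  - destruct (Hpw x (x + 1)) as [D HD].
    assert (T := taylorL f df ddf D x (x + 1) (eps / 2) ltac:(lra) Hf Hdfc HD).
    assert (T' : Rabs (f (x + 1) - f x - df x * (x + 1 - x)) <= eps / 2 * (x + 1 - x) ^ 2 / 2).
    { apply T. intros t Ht. left. apply H2. lra. }
    replace (x + 1 - x) with 1 in T' by ring.
    assert (A := H1 x ltac:(lra)). assert (B := H1 (x + 1) ltac:(lra)).
    apply abs_le_inv in T'. apply abs_lt_inv in A. apply abs_lt_inv in B.
    apply abs_lt_intro. lra.
  - destruct (Hpw (x - 1) x) as [D HD].
    assert (T := taylorR f df ddf D (x - 1) x (eps / 2) ltac:(lra) Hf Hdfc HD).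
    assert (T' : Rabs (f (x - 1) - f x - df x * (x - 1 - x)) <= eps / 2 * (x - (x - 1)) ^ 2 / 2).
    { apply T. intros t Ht. left. apply H2. lra. }
    replace (x - (x - 1)) with 1 in T' by ring.
    assert (A := H1 x ltac:(lra)). assert (B := H1 (x - 1) ltac:(lra)).
    apply abs_le_inv in T'. apply abs_lt_inv in A. apply abs_lt_inv in B.
    apply abs_lt_intro. lra.
Qed.

Definition trig (a b K : R) (y : R) := a * cos (K * y) + b * sin (K * y).

Lemma dtrig a b K x : derivable_pt_lim (trig a b K) x (trig (K * b) (- (K * a)) K x).
Proof.
  unfold trig.
  assert (HK : derivable_pt_lim (fun y => K * y) x K).
  { assert (H1 : derivable_pt_lim (fun y => K * id y) x (K * 1)).
    { apply derivable_pt_lim_scal. apply derivable_pt_lim_id. }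
    rewrite Rmult_1_r in H1. exact H1. }
  replace (K * b * cos (K * x) + - (K * a) * sin (K * x)) with
    (a * (- sin (K * x) * K) + b * (cos (K * x) * K)) by ring.
  apply derivable_pt_lim_plus; apply derivable_pt_lim_scal.
  - apply (derivable_pt_lim_comp (fun y => K * y) cos); auto. apply derivable_pt_lim_cos.
  - apply (derivable_pt_lim_comp (fun y => K * y) sin); auto. apply derivable_pt_lim_sin.
Qed.

Lemma dtrig2 a b K x : derivable_pt_lim (trig (K * b) (- (K * a)) K) x (- (K ^ 2 * trig a b K x)).
Proof.
  replace (- (K ^ 2 * trig a b K x)) with (trig (K * - (K * a)) (- (K * (K * b))) K x)
    by (unfold trig; ring).
  apply dtrig.
Qed.

Lemma EB_trig s a b K : EB s (trig a b K).
Proof.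
  exists (Rabs a + Rabs b). exists 0. intros x _. unfold trig.
  apply Rle_trans with (1 := Rabs_triang _ _). rewrite !Rabs_mult.
  pose proof (COS_bound (K * x)) as [A B]. pose proof (SIN_bound (K * x)) as [C D].
  assert (Rabs (cos (K * x)) <= 1) by (apply abs_le_intro; lra).
  assert (Rabs (sin (K * x)) <= 1) by (apply abs_le_intro; lra).
  pose proof (Rabs_pos a). pose proof (Rabs_pos b).
  apply Rplus_le_compat.
  - rewrite <- (Rmult_1_r (Rabs a)) at 2. apply Rmult_le_compat_l; auto.
  - rewrite <- (Rmult_1_r (Rabs b)) at 2. apply Rmult_le_compat_l; auto.
Qed.

Lemma comp_deriv s (k2 p dp : R -> R) K a b :
  s = 1 \/ s = -1 -> piecewise_continuous k2 ->
  (forall x, derivable_pt_lim p x (dp x)) -> (forall x, continuity_pt dp x) ->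
  (forall x, continuity_pt k2 x -> derivable_pt_lim dp x (- (k2 x * p x))) ->
  L0 s (fun x => k2 x - K ^ 2) -> L0 s (fun x => p x - trig a b K x) ->
  L0 s (fun x => dp x - trig (K * b) (- (K * a)) K x).
Proof.
  intros Hs [_ Hpw] Hp Hdpc Hdp Hk Hpv.
  apply (landau s (fun x => p x - trig a b K x) _
     (fun x => - (k2 x * p x) - - (K ^ 2 * trig a b K x))); auto.
  - intros t. apply derivable_pt_lim_minus; auto. apply dtrig.
  - intros t. apply continuity_pt_minus; auto.
    apply derivable_continuous_pt. exists (- (K ^ 2 * trig a b K t)). apply dtrig2.
  - intros a0 b0. destruct (Hpw a0 b0) as [D HD]. exists D. intros t Ht Hn.
    apply derivable_pt_lim_minus. apply Hdp, HD; auto. apply dtrig2.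
  - apply L0_ext with (fun x => - ((k2 x - K ^ 2) * ((p x - trig a b K x) + trig a b K x))
        - K ^ 2 * (p x - trig a b K x)).
    { intros; ring. }
    apply L0_minus.
    + apply L0_opp. apply L0_mult; auto. apply EB_plus. apply L0_EB; auto. apply EB_trig.
    + apply L0_mult_l; auto. apply EB_const.
Qed.

Definition Efun (h p q dp dq : R -> R) x :=
  h x * (p x ^ 2 + q x ^ 2) + (dp x ^ 2 + dq x ^ 2) / h x.
Definition Wfun (p q dp dq : R -> R) x := p x * dq x - q x * dp x.

Lemma cs1 y : cos y ^ 2 + sin y ^ 2 = 1.
Proof. pose proof (sin2_cos2 y) as H. unfold Rsqr in H. nra. Qed.

Lemma model_E a1 b1 a2 b2 K x : 0 < K ->
  K * (trig a1 b1 K x ^ 2 + trig a2 b2 K x ^ 2) +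
  (trig (K * b1) (- (K * a1)) K x ^ 2 + trig (K * b2) (- (K * a2)) K x ^ 2) / K
  = K * (a1 ^ 2 + b1 ^ 2 + a2 ^ 2 + b2 ^ 2).
Proof.
  intros HK. unfold trig. pose proof (cs1 (K * x)) as H.
  transitivity (K * (cos (K * x) ^ 2 + sin (K * x) ^ 2) * (a1 ^ 2 + b1 ^ 2 + a2 ^ 2 + b2 ^ 2)).
  - field. lra.
  - rewrite H. ring.
Qed.

Lemma model_W a1 b1 a2 b2 K x :
  trig a1 b1 K x * trig (K * b2) (- (K * a2)) K x - trig a2 b2 K x * trig (K * b1) (- (K * a1)) K x
  = K * (a1 * b2 - a2 * b1).
Proof.
  unfold trig. pose proof (cs1 (K * x)) as H.
  transitivity (K * (cos (K * x) ^ 2 + sin (K * x) ^ 2) * (a1 * b2 - a2 * b1)).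
  - ring.
  - rewrite H. ring.
Qed.

Lemma EB_sq s f : EB s f -> EB s (fun x => f x ^ 2).
Proof. intros H. apply EB_ext with (fun x => f x * f x). intros; ring. apply EB_mult; auto. Qed.

Lemma end_lim s (k2 h p q dp dq : R -> R) K a1 b1 a2 b2 :
  s = 1 \/ s = -1 -> piecewise_continuous k2 -> 0 < K -> (forall x, 0 < h x) ->
  (forall x, derivable_pt_lim p x (dp x)) -> (forall x, continuity_pt dp x) ->
  (forall x, continuity_pt k2 x -> derivable_pt_lim dp x (- (k2 x * p x))) ->
  (forall x, derivable_pt_lim q x (dq x)) -> (forall x, continuity_pt dq x) ->
  (forall x, continuity_pt k2 x -> derivable_pt_lim dq x (- (k2 x * q x))) ->
  L0 s (fun x => h x - K) -> L0 s (fun x => k2 x - K ^ 2) ->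
  L0 s (fun x => p x - trig a1 b1 K x) -> L0 s (fun x => q x - trig a2 b2 K x) ->
  L0 s (fun x => Efun h p q dp dq x - K * (a1 ^ 2 + b1 ^ 2 + a2 ^ 2 + b2 ^ 2)) /\
  L0 s (fun x => Wfun p q dp dq x - K * (a1 * b2 - a2 * b1)).
Proof.
  intros Hs Hpw HK Hh Hp Hdpc Hdp Hq Hdqc Hdq He Hk Hf1 Hf2.
  set (v1 := trig a1 b1 K) in *. set (v2 := trig a2 b2 K) in *.
  set (w1 := trig (K * b1) (- (K * a1)) K). set (w2 := trig (K * b2) (- (K * a2)) K).
  assert (Hg1 : L0 s (fun x => dp x - w1 x)) by (apply (comp_deriv s k2 p dp K a1 b1); auto).
  assert (Hg2 : L0 s (fun x => dq x - w2 x)) by (apply (comp_deriv s k2 q dq K a2 b2); auto).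
  assert (Bv1 : EB s v1) by apply EB_trig. assert (Bv2 : EB s v2) by apply EB_trig.
  assert (Bw1 : EB s w1) by apply EB_trig. assert (Bw2 : EB s w2) by apply EB_trig.
  assert (Bp : EB s p).
  { apply EB_ext with (fun x => (p x - v1 x) + v1 x). intros; ring.
    apply EB_plus; auto. apply L0_EB; auto. }
  assert (Bq : EB s q).
  { apply EB_ext with (fun x => (q x - v2 x) + v2 x). intros; ring.
    apply EB_plus; auto. apply L0_EB; auto. }
  assert (Bdp : EB s dp).
  { apply EB_ext with (fun x => (dp x - w1 x) + w1 x). intros; ring.
    apply EB_plus; auto. apply L0_EB; auto. }
  assert (Bdq : EB s dq).
  { apply EB_ext with (fun x => (dq x - w2 x) + w2 x). intros; ring.
    apply EB_plus; auto. apply L0_EB; auto. }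
  destruct (L0_pos_inv s h K HK He) as [_ Bih].
  split.
  - apply L0_ext with (fun x =>
      (h x - K) * (p x ^ 2 + q x ^ 2)
      + K * ((p x - v1 x) * (p x + v1 x) + (q x - v2 x) * (q x + v2 x))
      + / h x * ((dp x - w1 x) * (dp x + w1 x) + (dq x - w2 x) * (dq x + w2 x))
      - (h x - K) * ((w1 x ^ 2 + w2 x ^ 2) * (/ h x * / K))).
    { intros x. rewrite <- (model_E a1 b1 a2 b2 K x HK). unfold Efun.
      fold v1 v2 w1 w2. pose proof (Hh x). field. lra. }
    repeat apply L0_plus || apply L0_minus.
    + apply L0_mult; auto. apply EB_plus; apply EB_sq; auto.
    + apply L0_mult_l. apply EB_const.
      apply L0_plus; apply L0_mult; auto; apply EB_plus; auto.
    + apply L0_mult_l; auto.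
      apply L0_plus; apply L0_mult; auto; apply EB_plus; auto.
    + apply L0_opp. apply L0_mult; auto. apply EB_mult. apply EB_plus; apply EB_sq; auto.
      apply EB_mult; auto. apply EB_const.
  - apply L0_ext with (fun x =>
      (p x - v1 x) * dq x + v1 x * (dq x - w2 x) - ((q x - v2 x) * dp x + v2 x * (dp x - w1 x))).
    { intros x. rewrite <- (model_W a1 b1 a2 b2 K x). unfold Wfun. fold v1 v2 w1 w2. ring. }
    apply L0_minus; apply L0_plus.
    + apply L0_mult; auto.
    + apply L0_mult_l; auto.
    + apply L0_mult; auto.
    + apply L0_mult_l; auto.
Qed.

Lemma dval f x l l' : derivable_pt_lim f x l -> l = l' -> derivable_pt_lim f x l'.
Proof. intros H ->; auto. Qed.

Lemma dsq f t l : derivable_pt_lim f t l -> derivable_pt_lim (fun x => f x ^ 2) t (2 * f t * l).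
Proof.
  intros H. apply dval with (INR 2 * f t ^ Nat.pred 2 * l).
  - apply (derivable_pt_lim_comp f (fun y => y ^ 2)); auto. apply derivable_pt_lim_pow.
  - simpl; ring.
Qed.

Definition Psi (c d z : R) := ln (z + sqrt (z ^ 2 - c ^ 2 + d)).

Lemma dPsi c d z : 0 <= z -> 0 < z ^ 2 - c ^ 2 + d ->
  derivable_pt_lim (Psi c d) z (/ sqrt (z ^ 2 - c ^ 2 + d)).
Proof.
  intros Hz HS. set (S := z ^ 2 - c ^ 2 + d).
  assert (HsS : 0 < sqrt S) by (apply sqrt_lt_R0; auto).
  assert (Hin : derivable_pt_lim (fun y => y + sqrt (y ^ 2 - c ^ 2 + d)) z
                 (1 + 2 * z * 1 * / (2 * sqrt S))).
  { apply derivable_pt_lim_plus. apply derivable_pt_lim_id.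
    apply dval with (/ (2 * sqrt S) * ((2 * z * 1 - 0) + 0)).
    - apply (derivable_pt_lim_comp (fun y => y ^ 2 - c ^ 2 + d) sqrt).
      + apply derivable_pt_lim_plus. apply derivable_pt_lim_minus.
        apply dsq. apply derivable_pt_lim_id. apply derivable_pt_lim_const.
        apply derivable_pt_lim_const.
      + apply derivable_pt_lim_sqrt. auto.
    - ring. }
  unfold Psi. apply dval with (/ (z + sqrt S) * (1 + 2 * z * 1 * / (2 * sqrt S))).
  - apply (derivable_pt_lim_comp (fun y => y + sqrt (y ^ 2 - c ^ 2 + d)) ln); auto.
    apply derivable_pt_lim_ln. fold S. lra.
  - field. lra.
Qed.

Lemma abs_comb a b X Y : Rabs (a * X + b * Y) <= (Rabs a + Rabs b) * sqrt (X ^ 2 + Y ^ 2).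
Proof.
  assert (HX : Rabs X <= sqrt (X ^ 2 + Y ^ 2)).
  { rewrite <- sqrt_Rsqr_abs. apply sqrt_le_1_alt. unfold Rsqr. nra. }
  assert (HY : Rabs Y <= sqrt (X ^ 2 + Y ^ 2)).
  { rewrite <- sqrt_Rsqr_abs. apply sqrt_le_1_alt. unfold Rsqr. nra. }
  apply Rle_trans with (1 := Rabs_triang _ _). rewrite !Rabs_mult.
  pose proof (Rabs_pos a). pose proof (Rabs_pos b).
  rewrite Rmult_plus_distr_r. apply Rplus_le_compat; apply Rmult_le_compat_l; auto.
Qed.

Definition dEf (k2 h dh p q dp dq : R -> R) t :=
  dh t * (p t ^ 2 + q t ^ 2) + h t * (2 * p t * dp t + 2 * q t * dq t) +
  ((2 * dp t * (- (k2 t * p t)) + 2 * dq t * (- (k2 t * q t))) * h t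
     - (dp t ^ 2 + dq t ^ 2) * dh t) / (h t ^ 2).

Definition Hf (h p q dp dq : R -> R) W0 d sg x :=
  - Psi (2 * W0) d (Efun h p q dp dq x) - sg * ln (h x).

Definition dHf (k2 h dh p q dp dq : R -> R) W0 d sg t :=
  - (dEf k2 h dh p q dp dq t / sqrt (Efun h p q dp dq t ^ 2 - (2 * W0) ^ 2 + d))
  - sg * (dh t / h t).

Lemma E_identity (h p q dp dq : R -> R) t : 0 < h t ->
  Efun h p q dp dq t ^ 2 - 4 * Wfun p q dp dq t ^ 2 =
  (h t * (p t ^ 2 + q t ^ 2) - (dp t ^ 2 + dq t ^ 2) / h t) ^ 2 +
  (2 * (p t * dp t + q t * dq t)) ^ 2.
Proof. intros Hh. unfold Efun, Wfun. field. lra. Qed.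

Lemma E_nonneg (h p q dp dq : R -> R) t : 0 < h t -> 0 <= Efun h p q dp dq t.
Proof.
  intros Hh. unfold Efun.
  assert (0 <= (dp t ^ 2 + dq t ^ 2) / h t).
  { apply Rmult_le_pos. nra. left; apply Rinv_0_lt_compat; auto. }
  nra.
Qed.

Lemma Hderiv (k2 h dh p q dp dq : R -> R) W0 d sg t :
  (forall x, 0 < h x) -> derivable_pt_lim h t (dh t) ->
  derivable_pt_lim p t (dp t) -> derivable_pt_lim q t (dq t) ->
  derivable_pt_lim dp t (- (k2 t * p t)) -> derivable_pt_lim dq t (- (k2 t * q t)) ->
  Wfun p q dp dq t = W0 -> 0 < d -> sg * dh t = Rabs (dh t) ->
  derivable_pt_lim (Hf h p q dp dq W0 d sg) t (dHf k2 h dh p q dp dq W0 d sg t) /\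
  dHf k2 h dh p q dp dq W0 d sg t <= Rabs (k2 t - h t ^ 2) / h t.
Proof.
  intros Hh Hdh Hp Hq Hdp Hdq HW Hd Hsg.
  pose proof (Hh t) as Ht.
  set (E := Efun h p q dp dq t).
  set (X := h t * (p t ^ 2 + q t ^ 2) - (dp t ^ 2 + dq t ^ 2) / h t).
  set (Y := 2 * (p t * dp t + q t * dq t)).
  assert (HEid : E ^ 2 - (2 * W0) ^ 2 = X ^ 2 + Y ^ 2).
  { unfold E, X, Y. rewrite <- (E_identity h p q dp dq t Ht). rewrite HW. ring. }
  assert (HE0 : 0 <= E) by (apply E_nonneg; auto).
  assert (HS : 0 < E ^ 2 - (2 * W0) ^ 2 + d) by nra.
  assert (HdE : derivable_pt_lim (Efun h p q dp dq) t (dEf k2 h dh p q dp dq t)).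
  { unfold Efun, dEf.
    apply derivable_pt_lim_plus.
    - apply (derivable_pt_lim_mult h (fun x => p x ^ 2 + q x ^ 2)); auto.
      apply dval with (2 * p t * dp t + 2 * q t * dq t); [|ring].
      apply derivable_pt_lim_plus; apply dsq; auto.
    - apply dval with (((2 * dp t * - (k2 t * p t) + 2 * dq t * - (k2 t * q t)) * h t -
         dh t * (dp t ^ 2 + dq t ^ 2)) / (h t)²).
      + apply (derivable_pt_lim_div (fun x => dp x ^ 2 + dq x ^ 2) h); auto; [|lra].
        apply derivable_pt_lim_plus; apply dsq; auto.
      + unfold Rsqr. field. lra. }
  split.
  - unfold Hf, dHf. apply derivable_pt_lim_minus.
    + apply derivable_pt_lim_opp.
      apply dval with (/ sqrt (E ^ 2 - (2 * W0) ^ 2 + d) * dEf k2 h dh p q dp dq t).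
      * apply (derivable_pt_lim_comp (Efun h p q dp dq) (Psi (2 * W0) d)); auto.
        apply dPsi; auto.
      * fold E. unfold Rdiv. ring.
    + apply dval with (sg * (/ h t * dh t)).
      * apply derivable_pt_lim_scal.
        apply (derivable_pt_lim_comp h ln); auto. apply derivable_pt_lim_ln; auto.
      * unfold Rdiv. ring.
  - unfold dHf. fold E.
    set (a := dh t / h t). set (b := (h t ^ 2 - k2 t) / h t).
    assert (HdEf : dEf k2 h dh p q dp dq t = a * X + b * Y).
    { unfold dEf, a, b, X, Y. field. lra. }
    rewrite HdEf.
    assert (Hs1 : sqrt (X ^ 2 + Y ^ 2) <= sqrt (E ^ 2 - (2 * W0) ^ 2 + d)).
    { apply sqrt_le_1_alt. lra. }
    assert (Hs2 : 0 < sqrt (E ^ 2 - (2 * W0) ^ 2 + d)) by (apply sqrt_lt_R0; auto).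
    assert (Hc := abs_comb a b X Y).
    assert (Ha : Rabs a = sg * a).
    { unfold a. unfold Rdiv. rewrite Rabs_mult. rewrite Rabs_inv.
      rewrite (Rabs_pos_eq (h t)) by lra. rewrite <- Hsg. ring. }
    assert (Hb : Rabs b = Rabs (k2 t - h t ^ 2) / h t).
    { unfold b. unfold Rdiv. rewrite Rabs_mult. rewrite Rabs_inv.
      rewrite (Rabs_pos_eq (h t)) by lra. rewrite <- Rabs_Ropp.
      replace (- (h t ^ 2 - k2 t)) with (k2 t - h t ^ 2) by ring. reflexivity. }
    set (sq := sqrt (E ^ 2 - (2 * W0) ^ 2 + d)) in *.
    assert (Hq1 : Rabs ((a * X + b * Y) / sq) <= Rabs a + Rabs b).
    { unfold Rdiv. rewrite Rabs_mult. rewrite Rabs_inv. rewrite (Rabs_pos_eq sq) by lra.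
      apply Rle_trans with ((Rabs a + Rabs b) * sqrt (X ^ 2 + Y ^ 2) * / sq).
      - apply Rmult_le_compat_r; auto. left; apply Rinv_0_lt_compat; auto.
      - pose proof (Rabs_pos a); pose proof (Rabs_pos b).
        apply Rle_trans with ((Rabs a + Rabs b) * sq * / sq).
        + apply Rmult_le_compat_r. left; apply Rinv_0_lt_compat; auto.
          apply Rmult_le_compat_l; auto. lra.
        + right. field. lra. }
    apply abs_le_inv in Hq1. rewrite <- Hb. rewrite Ha in Hq1. lra.
Qed.

Lemma W_const (k2 p q dp dq : R -> R) :
  piecewise_continuous k2 ->
  (forall x, derivable_pt_lim p x (dp x)) -> (forall x, continuity_pt dp x) ->
  (forall x, continuity_pt k2 x -> derivable_pt_lim dp x (- (k2 x * p x))) ->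
  (forall x, derivable_pt_lim q x (dq x)) -> (forall x, continuity_pt dq x) ->
  (forall x, continuity_pt k2 x -> derivable_pt_lim dq x (- (k2 x * q x))) ->
  forall x, Wfun p q dp dq x = Wfun p q dp dq 0.
Proof.
  intros [_ Hpw] Hp Hdpc Hdp Hq Hdqc Hdq.
  assert (Hc : forall t, continuity_pt (Wfun p q dp dq) t).
  { intros t. unfold Wfun. apply continuity_pt_minus; apply continuity_pt_mult; auto;
    apply (cont_of_deriv _ _ Hp) || apply (cont_of_deriv _ _ Hq). }
  assert (Hd : forall t, continuity_pt k2 t ->
     derivable_pt_lim (Wfun p q dp dq) t 0).
  { intros t Ht. unfold Wfun.
    apply dval with ((dp t * dq t + p t * - (k2 t * q t)) - (dq t * dp t + q t * - (k2 t * p t))).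
    - apply derivable_pt_lim_minus.
      + apply (derivable_pt_lim_mult p dq); auto.
      + apply (derivable_pt_lim_mult q dp); auto.
    - ring. }
  assert (Hle : forall a b, a <= b -> Wfun p q dp dq b = Wfun p q dp dq a).
  { intros a b Hab. destruct (Hpw a b) as [D HD].
    assert (A := cmp (Wfun p q dp dq) (fun _ => 0) 0 D a b Hab (fun t _ => Hc t)).
    assert (B := cmp (fun x => - Wfun p q dp dq x) (fun _ => - 0) 0 D a b Hab
       (fun t _ => continuity_pt_opp _ _ (Hc t))).
    assert (A' : Wfun p q dp dq b - Wfun p q dp dq a <= 0 * (b - a)).
    { apply A. intros t Ht Hn. split; [apply Hd, HD; auto; lra | lra]. }
    assert (B' : - Wfun p q dp dq b - - Wfun p q dp dq a <= 0 * (b - a)).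
    { apply B. intros t Ht Hn. split; [|lra].
      apply derivable_pt_lim_opp. apply Hd, HD; auto; lra. }
    lra. }
  intros x. destruct (Rle_dec 0 x).
  - apply Hle; auto.
  - symmetry; apply Hle; lra.
Qed.

Lemma sign_lemma (h dh : R -> R) :
  monotone h -> (forall x, derivable_pt_lim h x (dh x)) ->
  exists sg, (sg = 1 \/ sg = -1) /\ forall x, sg * dh x = Rabs (dh x).
Proof.
  intros [Hm|Hm] Hd.
  - exists 1. split; [left; auto|]. intros x.
    pose (pr := fun y => exist (fun l => derivable_pt_abs h y l) (dh y) (Hd y)).
    assert (H := nonneg_derivative_0 h pr Hm x).
    change (derive_pt h x (pr x)) with (dh x) in H.
    rewrite Rabs_pos_eq; lra.
  - exists (-1). split; [right; auto|]. intros x.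
    pose (pr := fun y => exist (fun l => derivable_pt_abs (fun z => - h z) y l) (- dh y)
                          (derivable_pt_lim_opp h y (dh y) (Hd y))).
    assert (Hm' : increasing (fun z => - h z)).
    { intros a b Hab. specialize (Hm a b Hab). lra. }
    assert (H := nonneg_derivative_0 _ pr Hm' x).
    change (derive_pt (fun z => - h z) x (pr x)) with (- dh x) in H.
    rewrite Rabs_left1; lra.
Qed.

Lemma L0_comp s (f G : R -> R) l :
  L0 s (fun x => f x - l) -> continuity_pt G l -> L0 s (fun x => G (f x) - G l).
Proof.
  intros Hf HG eps He.
  unfold continuity_pt, continue_in, limit1_in, limit_in in HG.
  destruct (HG eps He) as [alp [Halp Hx]].
  apply (evs_mono s (fun x => Rabs (f x - l) < alp)).
  - intros x Hfx. destruct (Req_dec (f x) l) as [E|E].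
    + rewrite E, Rminus_diag, Rabs_R0; auto.
    + apply (Hx (f x)). split.
      * split; [exact I|]. auto.
      * simpl. unfold Rdist. auto.
  - apply Hf; auto.
Qed.

Lemma ln_le_mono x y : 0 < x -> x <= y -> ln x <= ln y.
Proof. intros Hx [H|H]. left; apply ln_increasing; auto. subst; lra. Qed.

Lemma final_alg km kp N R L :
  0 < km -> 0 < kp -> 0 <= N -> 0 <= R -> kp * N = km * (1 - R) ->
  (forall d, 0 < d -> Psi (2 * (kp * N)) d (2 * km * (1 + R)) -
                      Psi (2 * (kp * N)) d (2 * (kp * N)) <= L) ->
  kp / km * N >= sech (/ 2 * L) ^ 2.
Proof.
  intros Hkm Hkp HN HR HW Hd.
  set (x := exp (/ 2 * L)).
  assert (Hx : 0 < x) by apply exp_pos.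
  assert (Hsech : sech (/ 2 * L) = 2 * x / (x ^ 2 + 1)).
  { unfold sech, cosh. fold x. rewrite exp_Ropp. fold x. field. split; nra. }
  assert (HT : kp / km * N = 1 - R).
  { replace (kp / km * N) with (kp * N / km) by (field; lra). rewrite HW. field; lra. }
  rewrite HT, Hsech.
  apply Rnot_lt_ge. intros Hlt.
  set (t := sqrt R). assert (Ht0 : 0 <= t) by apply sqrt_pos.
  assert (Htt : t * t = R) by (apply sqrt_sqrt; auto).
  assert (HR1 : R <= 1) by nra.
  assert (Hx2 : (1 - t * t) * (x ^ 2 + 1) ^ 2 < 4 * x ^ 2).
  { rewrite Htt. replace ((2 * x / (x ^ 2 + 1)) ^ 2) with (4 * x ^ 2 / (x ^ 2 + 1) ^ 2) in Hlt
      by (field; nra).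
    apply Rmult_lt_compat_r with (r := (x ^ 2 + 1) ^ 2) in Hlt; [|nra].
    replace (4 * x ^ 2 / (x ^ 2 + 1) ^ 2 * (x ^ 2 + 1) ^ 2) with (4 * x ^ 2) in Hlt by (field; nra).
    lra. }
  assert (Hkey : x ^ 2 * (1 - t) < 1 + t).
  { apply Rnot_le_lt. intros Hc.
    assert (A : t * (x ^ 2 + 1) <= x ^ 2 - 1) by nra.
    assert (B : t * (x ^ 2 + 1) * (t * (x ^ 2 + 1)) <= (x ^ 2 - 1) * (x ^ 2 - 1)).
    { apply Rmult_le_compat; nra. }
    nra. }
  set (c := 2 * (kp * N)). set (Em := 2 * km * (1 + R)).
  assert (Hc : c = 2 * km * (1 - t * t)) by (unfold c; rewrite HW, Htt; ring).
  assert (HEm : Em = 2 * km * (1 + t * t)) by (unfold Em; rewrite Htt; ring).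
  assert (Hpos : x ^ 2 * c < Em + 4 * km * t).
  { rewrite Hc, HEm. assert (0 <= 1 + t) by lra.
    assert (x ^ 2 * (1 - t) * (1 + t) < (1 + t) * (1 + t)).
    { apply Rmult_lt_compat_r; nra. }
    nra. }
  set (s0 := (Em + 4 * km * t - x ^ 2 * c) / (2 * x ^ 2)).
  assert (Hs0 : 0 < s0) by (unfold s0; apply Rdiv_lt_0_compat; nra).
  specialize (Hd (s0 ^ 2) ltac:(nra)). fold c Em in Hd.
  unfold Psi in Hd.
  replace (c ^ 2 - c ^ 2 + s0 ^ 2) with (s0 ^ 2) in Hd by ring.
  rewrite sqrt_pow2 in Hd by lra.
  assert (Hc0 : 0 <= c) by (unfold c; nra).
  assert (Hsq : 4 * km * t <= sqrt (Em ^ 2 - c ^ 2 + s0 ^ 2)).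
  { rewrite <- (sqrt_pow2 (4 * km * t)) by nra. apply sqrt_le_1_alt.
    rewrite Hc, HEm. nra. }
  assert (HEm0 : 0 < Em) by (rewrite HEm; nra).
  assert (L1 : ln (Em + 4 * km * t) <= ln (Em + sqrt (Em ^ 2 - c ^ 2 + s0 ^ 2))).
  { apply ln_le_mono; nra. }
  assert (L2 : ln (x ^ 2 * (c + s0)) < ln (Em + 4 * km * t)).
  { apply ln_increasing. nra. unfold s0. field_simplify; nra. }
  rewrite ln_mult in L2 by nra.
  assert (L3 : ln (x ^ 2) = L).
  { replace (x ^ 2) with (exp (/ 2 * L + / 2 * L)).
    rewrite ln_exp; field. unfold x. rewrite exp_plus; ring. }
  lra.
Qed.

Lemma cont_sq f t : continuity_pt f t -> continuity_pt (fun x => f x ^ 2) t.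
Proof.
  intros H. apply (continuity_pt_comp f (fun y => y ^ 2)); auto.
  apply derivable_continuous_pt. exists (2 * f t * 1). apply (dsq (fun y => y)).
  apply derivable_pt_lim_id.
Qed.

Lemma E_cont (h p q dp dq : R -> R) t :
  continuity_pt h t -> continuity_pt p t -> continuity_pt q t ->
  continuity_pt dp t -> continuity_pt dq t -> h t <> 0 ->
  continuity_pt (Efun h p q dp dq) t.
Proof.
  intros Hh Hp Hq Hdp Hdq Hne. unfold Efun.
  apply (continuity_pt_plus (fun x => h x * (p x ^ 2 + q x ^ 2)) (fun x => (dp x ^ 2 + dq x ^ 2) / h x)).
  - apply (continuity_pt_mult h (fun x => p x ^ 2 + q x ^ 2)); auto.
    apply (continuity_pt_plus (fun x => p x ^ 2) (fun x => q x ^ 2)); apply cont_sq; auto.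
  - apply (continuity_pt_div (fun x => dp x ^ 2 + dq x ^ 2) h); auto.
    apply (continuity_pt_plus (fun x => dp x ^ 2) (fun x => dq x ^ 2)); apply cont_sq; auto.
Qed.

Lemma L0_const s C l : s = 1 \/ s = -1 -> L0 s (fun _ => C - l) -> C = l.
Proof.
  intros Hs H. destruct (Req_dec C l) as [E|E]; auto.
  assert (Hp : 0 < Rabs (C - l)) by (apply Rabs_pos_lt; lra).
  destruct (H _ Hp) as [M HM].
  assert (HH : Rabs (C - l) < Rabs (C - l)).
  { apply (HM (s * M)). destruct Hs as [-> | ->]; lra. }
  lra.
Qed.

Lemma Psi_cont c d z : 0 <= z -> 0 < z ^ 2 - c ^ 2 + d -> continuity_pt (Psi c d) z.
Proof.
  intros H1 H2. apply derivable_continuous_pt. eexists. apply dPsi; auto.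
Qed.

Lemma ln_cont z : 0 < z -> continuity_pt ln z.
Proof. intros H. apply derivable_continuous_pt. eexists. apply derivable_pt_lim_ln; auto. Qed.

Lemma main_core (k2 h dh p q dp dq : R -> R) km kp r1 r2 t1 t2 I :
  piecewise_continuous k2 -> 0 < km -> 0 < kp ->
  lim_minf k2 (km ^ 2) -> lim_pinf k2 (kp ^ 2) ->
  (forall x, derivable_pt_lim p x (dp x)) -> (forall x, continuity_pt dp x) ->
  (forall x, continuity_pt k2 x -> derivable_pt_lim dp x (- (k2 x * p x))) ->
  (forall x, derivable_pt_lim q x (dq x)) -> (forall x, continuity_pt dq x) ->
  (forall x, continuity_pt k2 x -> derivable_pt_lim dq x (- (k2 x * q x))) ->
  L0 (-1) (fun x => p x - trig (1 + r1) r2 km x) ->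
  L0 (-1) (fun x => q x - trig r2 (1 - r1) km x) ->
  L0 1 (fun x => p x - trig t1 (- t2) kp x) ->
  L0 1 (fun x => q x - trig t2 t1 kp x) ->
  (forall x, derivable_pt_lim h x (dh x)) -> (forall x, 0 < h x) -> monotone h ->
  lim_minf h km -> lim_pinf h kp ->
  improper_integral_R (fun x => Rabs (k2 x - h x ^ 2) / h x) I ->
  kp / km * (t1 ^ 2 + t2 ^ 2) >= sech (/ 2 * Rabs (ln (kp / km)) + / 2 * I) ^ 2.
Proof.
  intros Hpw Hkm Hkp Hk2m Hk2p Hp Hdpc Hdp Hq Hdqc Hdq Hm1 Hm2 Hp1 Hp2 Hdh Hh Hmono Hhm Hhp HI.
  assert (Hsm : -1 = 1 \/ -1 = -1) by (right; reflexivity).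
  assert (Hsp : 1 = 1 \/ 1 = -1) by (left; reflexivity).
  assert (Hem := lim_minf_L0 _ _ Hhm). assert (Hep := lim_pinf_L0 _ _ Hhp).
  destruct (end_lim (-1) k2 h p q dp dq km (1 + r1) r2 r2 (1 - r1) Hsm Hpw Hkm Hh Hp Hdpc Hdp
     Hq Hdqc Hdq Hem (lim_minf_L0 _ _ Hk2m) Hm1 Hm2) as [HEm HWm].
  destruct (end_lim 1 k2 h p q dp dq kp t1 (- t2) t2 t1 Hsp Hpw Hkp Hh Hp Hdpc Hdp
     Hq Hdqc Hdq Hep (lim_pinf_L0 _ _ Hk2p) Hp1 Hp2) as [HEp HWp].
  set (W0 := Wfun p q dp dq 0).
  assert (HWc : forall x, Wfun p q dp dq x = W0) by (apply (W_const k2); auto).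
  assert (HW0m : W0 = km * ((1 + r1) * (1 - r1) - r2 * r2)).
  { apply (L0_const (-1)); auto. apply L0_ext with (2 := HWm). intros; rewrite HWc; try reflexivity. }
  assert (HW0p : W0 = kp * (t1 * t1 - t2 * - t2)).
  { apply (L0_const 1); auto. apply L0_ext with (2 := HWp). intros; rewrite HWc; try reflexivity. }
  destruct (sign_lemma h dh Hmono Hdh) as [sg [Hsg Hsgd]].
  set (Em := km * ((1 + r1) ^ 2 + r2 ^ 2 + r2 ^ 2 + (1 - r1) ^ 2)) in *.
  set (Ep := kp * (t1 ^ 2 + (- t2) ^ 2 + t2 ^ 2 + t1 ^ 2)) in *.
  set (g := fun x => Rabs (k2 x - h x ^ 2) / h x) in *.
  assert (Hlnq : ln (kp / km) = ln kp - ln km).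
  { unfold Rdiv. rewrite ln_mult, ln_Rinv; try apply Rinv_0_lt_compat; auto; ring. }
  assert (Key : forall d, 0 < d ->
     Psi (2 * W0) d Em - Psi (2 * W0) d Ep <= Rabs (ln (kp / km)) + I).
  { intros d Hd.
    set (A := fun x => Psi (2 * W0) d (Efun h p q dp dq x) + sg * ln (h x)).
    assert (Hcont : forall t, continuity_pt (Hf h p q dp dq W0 d sg) t).
    { intros t. unfold Hf.
      assert (HEc : continuity_pt (Efun h p q dp dq) t).
      { apply E_cont; try apply (cont_of_deriv _ _ Hdh); try apply (cont_of_deriv _ _ Hp);
        try apply (cont_of_deriv _ _ Hq); auto. pose proof (Hh t); lra. }
      apply (continuity_pt_minus (fun x => - Psi (2 * W0) d (Efun h p q dp dq x))
               (fun x => sg * ln (h x))).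
      - apply (continuity_pt_opp (fun x => Psi (2 * W0) d (Efun h p q dp dq x))).
        apply (continuity_pt_comp (Efun h p q dp dq) (Psi (2 * W0) d)); auto.
        apply Psi_cont. apply E_nonneg; auto.
        pose proof (E_identity h p q dp dq t (Hh t)) as Hid. rewrite HWc in Hid.
        match type of Hid with _ = ?X ^ 2 + ?Y ^ 2 =>
          pose proof (pow2_ge_0 X); pose proof (pow2_ge_0 Y) end.
        lra.
      - apply (continuity_pt_scal (fun x => ln (h x))).
        apply (continuity_pt_comp h ln). apply (cont_of_deriv _ _ Hdh). apply ln_cont; auto. }
    assert (Hbound : forall a b v, a <= b -> has_integral g a b v -> A a - A b <= v).
    { intros a b v Hab [pr Hv]. rewrite <- Hv.
      destruct Hpw as [_ Hpw']. destruct (Hpw' a b) as [D HD].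
      replace (A a - A b) with (Hf h p q dp dq W0 d sg b - Hf h p q dp dq W0 d sg a)
        by (unfold A, Hf; ring).
      apply (riemann_bound _ (dHf k2 h dh p q dp dq W0 d sg) g D a b pr Hab).
      - intros; auto.
      - intros t Ht Hn. assert (Hk := HD t ltac:(lra) Hn).
        apply Hderiv; auto. }
    assert (HcEm : 0 <= Em /\ 0 < Em ^ 2 - (2 * W0) ^ 2 + d).
    { assert (A1 : Em - 2 * W0 = 4 * km * (r1 ^ 2 + r2 ^ 2)) by (unfold Em; rewrite HW0m; ring).
      assert (A2 : Em + 2 * W0 = 4 * km) by (unfold Em; rewrite HW0m; ring).
      assert (0 <= r1 ^ 2 + r2 ^ 2) by nra.
      split. nra.
      replace (Em ^ 2 - (2 * W0) ^ 2) with ((Em - 2 * W0) * (Em + 2 * W0)) by ring.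
      rewrite A1, A2. nra. }
    assert (HEpW : Ep = 2 * W0) by (unfold Ep; rewrite HW0p; ring).
    assert (HcEp : 0 <= Ep /\ 0 < Ep ^ 2 - (2 * W0) ^ 2 + d).
    { split. unfold Ep. nra. rewrite HEpW. nra. }
    assert (LAm : L0 (-1) (fun x => A x - (Psi (2 * W0) d Em + sg * ln km))).
    { apply L0_ext with (fun x => (Psi (2 * W0) d (Efun h p q dp dq x) - Psi (2 * W0) d Em)
                                  + sg * (ln (h x) - ln km)).
      { intros; unfold A; ring. }
      apply L0_plus.
      - apply (L0_comp (-1) (Efun h p q dp dq)); auto. apply Psi_cont; tauto.
      - apply L0_mult_l. apply EB_const. apply (L0_comp (-1) h); auto. apply ln_cont; auto. }
    assert (LAp : L0 1 (fun x => A x - (Psi (2 * W0) d Ep + sg * ln kp))).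
    { apply L0_ext with (fun x => (Psi (2 * W0) d (Efun h p q dp dq x) - Psi (2 * W0) d Ep)
                                  + sg * (ln (h x) - ln kp)).
      { intros; unfold A; ring. }
      apply L0_plus.
      - apply (L0_comp 1 (Efun h p q dp dq)); auto. apply Psi_cont; tauto.
      - apply L0_mult_l. apply EB_const. apply (L0_comp 1 h); auto. apply ln_cont; auto. }
    assert (Hlim : (Psi (2 * W0) d Em + sg * ln km) - (Psi (2 * W0) d Ep + sg * ln kp) <= I).
    { apply Rnot_lt_le. intros Hc.
      set (eps := ((Psi (2 * W0) d Em + sg * ln km) - (Psi (2 * W0) d Ep + sg * ln kp) - I) / 3).
      assert (Heps : 0 < eps) by (unfold eps; lra).
      destruct HI as [_ HI2]. destruct (HI2 eps Heps) as [M HM].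
      destruct (LAm eps Heps) as [Ma HMa]. destruct (LAp eps Heps) as [Mb HMb].
      set (a := - Rmax (Rmax Ma M) 0). set (b := Rmax (Rmax Mb M) 0).
      assert (Ha1 := Rmax_l (Rmax Ma M) 0). assert (Ha2 := Rmax_r (Rmax Ma M) 0).
      assert (Ha3 := Rmax_l Ma M). assert (Ha4 := Rmax_r Ma M).
      assert (Hb1 := Rmax_l (Rmax Mb M) 0). assert (Hb2 := Rmax_r (Rmax Mb M) 0).
      assert (Hb3 := Rmax_l Mb M). assert (Hb4 := Rmax_r Mb M).
      destruct (HM a b ltac:(unfold a; lra) ltac:(unfold b; lra)) as [v [Hv1 Hv2]].
      assert (B1 := Hbound a b v ltac:(unfold a, b; lra) Hv1).
      assert (C1 := HMa a ltac:(unfold a; lra)). assert (C2 := HMb b ltac:(unfold b; lra)).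
      apply abs_lt_inv in Hv2. apply abs_lt_inv in C1. apply abs_lt_inv in C2.
      unfold eps in *. lra. }
    rewrite Hlnq.
    assert (sg * (ln kp - ln km) <= Rabs (ln kp - ln km)).
    { destruct Hsg as [-> | ->].
      - rewrite Rmult_1_l. apply RRle_abs.
      - rewrite <- Rabs_Ropp. replace (-1 * (ln kp - ln km)) with (- (ln kp - ln km)) by ring.
        apply RRle_abs. }
    lra. }
  set (N := t1 ^ 2 + t2 ^ 2). set (R0 := r1 ^ 2 + r2 ^ 2).
  assert (HW0 : 2 * W0 = 2 * (kp * N)) by (unfold N; rewrite HW0p; ring).
  assert (HEm' : Em = 2 * km * (1 + R0)) by (unfold Em, R0; ring).
  assert (HEp' : Ep = 2 * (kp * N)) by (unfold Ep, N; ring).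
  replace (/ 2 * Rabs (ln (kp / km)) + / 2 * I) with (/ 2 * (Rabs (ln (kp / km)) + I)) by ring.
  apply (final_alg km kp N R0); auto.
  - unfold N; nra.
  - unfold R0; nra.
  - unfold N, R0. replace (kp * (t1 ^ 2 + t2 ^ 2)) with W0 by (rewrite HW0p; ring). rewrite HW0m; ring.
  - intros d Hd. pose proof (Key d Hd) as HK. rewrite HEm', HEp', HW0 in HK. exact HK.
Qed.

Theorem mainTheorem6
  (k2 : R -> R) (km kp : R) (u : R -> Cx) (r tau : Cx) (h : R -> R) (I : R) :
  piecewise_continuous k2 ->
  0 < km -> 0 < kp ->
  lim_minf k2 (km ^ 2) -> lim_pinf k2 (kp ^ 2) ->
  integrable_near_minf (fun x => k2 x - km ^ 2) ->
  integrable_near_pinf (fun x => k2 x - kp ^ 2) ->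
  is_solution k2 (fun x => fst (u x)) ->
  is_solution k2 (fun x => snd (u x)) ->
  Clim0_minf (fun x =>
    let v := Cadd (Cexpi (km * x)) (Cmul r (Cexpi (- (km * x)))) in
    (fst (u x) - fst v, snd (u x) - snd v)) ->
  Clim0_pinf (fun x =>
    let v := Cmul tau (Cexpi (kp * x)) in
    (fst (u x) - fst v, snd (u x) - snd v)) ->
  is_C1 h -> (forall x, 0 < h x) -> monotone h ->
  lim_minf h km -> lim_pinf h kp ->
  improper_integral_R (fun x => Rabs (k2 x - h x ^ 2) / h x) I ->
  (kp / km) * Cnorm2 tau >=
    (sech (/ 2 * Rabs (ln (kp / km)) + / 2 * I)) ^ 2.
Proof.
  intros Hpw Hkm Hkp Hk2m Hk2p _ _ [dp [Hp [Hdpc Hdp]]] [dq [Hq [Hdqc Hdq]]]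
    [Hm1 Hm2] [Hp1 Hp2] [dh [Hdh _]] Hh Hmono Hhm Hhp HI.
  destruct r as [r1 r2], tau as [t1 t2].
  change (Cnorm2 (t1, t2)) with (t1 ^ 2 + t2 ^ 2).
  apply (main_core k2 h dh (fun x => fst (u x)) (fun x => snd (u x)) dp dq km kp r1 r2 t1 t2 I);
    auto.
  - eapply L0_ext; [|exact (lim_minf_L0 _ _ Hm1)]. intros x. cbv beta.
    unfold trig, Cadd, Cmul, Cexpi; simpl. rewrite cos_neg, sin_neg. ring.
  - eapply L0_ext; [|exact (lim_minf_L0 _ _ Hm2)]. intros x. cbv beta.
    unfold trig, Cadd, Cmul, Cexpi; simpl. rewrite cos_neg, sin_neg. ring.
  - eapply L0_ext; [|exact (lim_pinf_L0 _ _ Hp1)]. intros x. cbv beta.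
    unfold trig, Cadd, Cmul, Cexpi; simpl. ring.
  - eapply L0_ext; [|exact (lim_pinf_L0 _ _ Hp2)]. intros x. cbv beta.
    unfold trig, Cadd, Cmul, Cexpi; simpl. ring.
Qed.
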